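(* Let $n,p\ge1$ be integers and let $A=A^{p+1}_{n+1}$ with the multiplication $\odot$ defined in the context. Then $\odot$ is associative and commutative, and $\langle A;\odot,\top\rangle$ is a commutative monoid with neutral element $\top=\langle(n,0),p\rangle$.
   Context: Order $\mathbb{Z}\times\mathbb{Z}$ lexicographically: $(m,r)\preccurlyeq(k,s)$ iff $m<k$, or $m=k$ and $r\le s$; addition/subtraction of pairs is componentwise, and $\min,\max$ of pairs refer to $\preccurlyeq$. For an integer $n\ge1$ let $L^\omega_{n+1}=\{(m,r)\in\mathbb{Z}^2:(0,0)\preccurlyeq(m,r)\preccurlyeq(n,0)\}$ with $x\ast y=\max\{(0,0),x+y-(n,0)\}$ and $x\to y=\min\{(n,0),(n,0)-x+y\}$. For an integer $p\ge1$ let $L_{p+1}=\{0,1,\dots,p\}$ with $\alpha\ast\beta=\max\{0,\alpha+\beta-p\}$. Define $$A=A^{p+1}_{n+1}=\{\langle(m,r),\alpha\rangle:(m,r)\in L^\omega_{n+1},\ \alpha\in\{0,p\}\}\cup\{\langle(m,r),\alpha\rangle:(0,0)\preccurlyeq(m,r)\preccurlyeq(n-1,0),\ 0<\alpha<p\}.$$ Put $\bot=\langle(n,0),0\rangle$, $\top=\langle(n,0),p\rangle$. For $a=\langle(m,r),\alpha\rangle$, $b=\langle(k,s),\beta\rangle\in A$ define $a\odot b$ by: (P1) if $\alpha,\beta\ge1$ and $\alpha+\beta>p$: $a\odot b=\langle(m,r)\ast(k,s),\alpha+\beta-p\rangle$; (P2) if $\alpha,\beta\ge1$ and $\alpha+\beta\le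 p$: $a\odot b=\langle\min\{(n,0),(2n-(m+k+1),-(r+s))\},0\rangle$; (P3) if $\alpha\ge1$, $\beta=0$: $a\odot b=\langle(m,r)\to(k,s),0\rangle$, and if $\alpha=0$, $\beta\ge1$: $a\odot b=\langle(k,s)\to(m,r),0\rangle$; (P4) if $\alpha=\beta=0$: $a\odot b=\langle\min\{(n,0),(m+k+1,r+s)\},0\rangle$. *)

(* Defs.v *)
From Stdlib Require Import ZArith Bool.
Open Scope Z_scope.

Definition lexle (x y : Z * Z) : Prop :=
  fst x < fst y \/ (fst x = fst y /\ snd x <= snd y).

Definition lexleb (x y : Z * Z) : bool :=
  (fst x <? fst y) || ((fst x =? fst y) && (snd x <=? snd y)).

Definition lexmin (x y : Z * Z) : Z * Z := if lexleb x y then x else y.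
Definition lexmax (x y : Z * Z) : Z * Z := if lexleb x y then y else x.

Definition padd (x y : Z * Z) : Z * Z := (fst x + fst y, snd x + snd y).
Definition psub (x y : Z * Z) : Z * Z := (fst x - fst y, snd x - snd y).

Definition lstar (n : Z) (x y : Z * Z) : Z * Z :=
  lexmax (0, 0) (psub (padd x y) (n, 0)).
Definition limp (n : Z) (x y : Z * Z) : Z * Z :=
  lexmin (n, 0) (padd (psub (n, 0) x) y).

Definition elt := ((Z * Z) * Z)%type.

Definition inA (n p : Z) (a : elt) : Prop :=
  let '(x, al) := a in
  (lexle (0, 0) x /\ lexle x (n, 0) /\ (al = 0 \/ al = p)) \/
  (lexle (0, 0) x /\ lexle x (n - 1, 0) /\ 0 < al < p).

Definition topA (n p : Z) : elt := ((n, 0), p).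
Definition botA (n p : Z) : elt := ((n, 0), 0).

Definition odot (n p : Z) (a b : elt) : elt :=
  let '((m, r), al) := a in
  let '((k, s), be) := b in
  if (1 <=? al) && (1 <=? be) then
    if p <? al + be then (lstar n (m, r) (k, s), al + be - p)
    else (lexmin (n, 0) (2 * n - (m + k + 1), - (r + s)), 0)
  else if (1 <=? al) && (be =? 0) then (limp n (m, r) (k, s), 0)
  else if (al =? 0) && (1 <=? be) then (limp n (k, s) (m, r), 0)
  else (lexmin (n, 0) (m + k + 1, r + s), 0).

(* Main.v *)
Require Import Defs.
From Stdlib Require Import ZArith Lia Bool.
Open Scope Z_scope.

Ltac noif t := lazymatch t with context[if _ then _ else _] => fail | _ => idtac end.
Ltac nolex t := lazymatch t with
  | context[if _ then _ else _] => fail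
  | context[lexmin _ _] => fail
  | context[lexmax _ _] => fail
  | _ => idtac end.

Lemma lexmin_spec x y : (lexle x y /\ lexmin x y = x) \/ (lexle y x /\ lexmin x y = y).
Proof.
  destruct x as [a b], y as [c d]; unfold lexmin, lexleb, lexle; cbn.
  destruct (Z.ltb_spec a c); destruct (Z.eqb_spec a c); destruct (Z.leb_spec b d); cbn;
  first [left; split; [lia|reflexivity] | right; split; [lia|reflexivity]].
Qed.
Lemma lexmax_spec x y : (lexle x y /\ lexmax x y = y) \/ (lexle y x /\ lexmax x y = x).
Proof.
  destruct x as [a b], y as [c d]; unfold lexmax, lexleb, lexle; cbn.
  destruct (Z.ltb_spec a c); destruct (Z.eqb_spec a c); destruct (Z.leb_spec b d); cbn;
  first [left; split; [lia|reflexivity] | right; split; [lia|reflexivity]].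
Qed.

Ltac split_cmp :=
  match goal with
  | |- context[?x <? ?y] => noif x; noif y; destruct (Z.ltb_spec x y); cbn [andb orb fst snd]; try (exfalso; lia)
  | |- context[?x <=? ?y] => noif x; noif y; destruct (Z.leb_spec x y); cbn [andb orb fst snd]; try (exfalso; lia)
  | |- context[?x =? ?y] => noif x; noif y; destruct (Z.eqb_spec x y); cbn [andb orb fst snd]; try (exfalso; lia)
  | |- context[lexmin ?x ?y] => nolex x; nolex y;
      let H := fresh "L" in let E := fresh "E" in
      destruct (lexmin_spec x y) as [[H E]|[H E]]; rewrite E; clear E; cbn [fst snd]
  | |- context[lexmax ?x ?y] => nolex x; nolex y;
      let H := fresh "L" in let E := fresh "E" in
      destruct (lexmax_spec x y) as [[H E]|[H E]]; rewrite E; clear E; cbn [fst snd]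
  end.

Ltac fin :=
  unfold lexle in *; cbn [fst snd] in *;
  repeat match goal with |- (_, _) = (_, _) => apply pair_equal_spec; split end;
  lia.

Ltac crush := unfold odot, lstar, limp, padd, psub, topA;
  cbn [fst snd];  repeat split_cmp.

Lemma inA_cases n p x al : inA n p (x, al) ->
  (al = 0 /\ lexle (0,0) x /\ lexle x (n,0)) \/ (al = p /\ lexle (0,0) x /\ lexle x (n,0)) \/
  (0 < al < p /\ lexle (0,0) x /\ lexle x (n-1,0)).
Proof. unfold inA; intuition. Qed.

Ltac cases H := apply inA_cases in H; destruct H as [[? [? ?]]|[[? [? ?]]|[? [? ?]]]]; subst.
Lemma clos n p (hn : 1 <= n) (hp : 1 <= p) m r k s al be :
  inA n p ((m,r),al) -> inA n p ((k,s),be) -> inA n p (odot n p ((m,r),al) ((k,s),be)).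
Proof.
  intros Ha Hb. cases Ha; cases Hb; crush; unfold inA, lexle in *; cbn [fst snd] in *; lia.
Qed.

Lemma comm n p (hn : 1 <= n) (hp : 1 <= p) m r k s al be :
  inA n p ((m,r),al) -> inA n p ((k,s),be) -> odot n p ((m,r),al) ((k,s),be) = odot n p ((k,s),be) ((m,r),al).
Proof.
  intros Ha Hb. cases Ha; cases Hb; crush; fin.
Qed.

Lemma neut n p (hn : 1 <= n) (hp : 1 <= p) m r al :
  inA n p ((m,r),al) -> odot n p (topA n p) ((m,r),al) = ((m,r),al) /\ odot n p ((m,r),al) (topA n p) = ((m,r),al).
Proof.
  intros Ha. cases Ha; split; crush; fin.
Qed.
Lemma assoc n p (hn : 1 <= n) (hp : 1 <= p) m r k s l t al be ga :
  inA n p ((m,r),al) -> inA n p ((k,s),be) -> inA n p ((l,t),ga) ->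
     odot n p (odot n p ((m,r),al) ((k,s),be)) ((l,t),ga) = odot n p ((m,r),al) (odot n p ((k,s),be) ((l,t),ga)).
Proof.
  intros Ha Hb Hc. cases Ha; cases Hb; cases Hc.
  all: crush.
  all: fin.
Qed.

Theorem mainTheorem3 (n p : Z) (hn : 1 <= n) (hp : 1 <= p) :
  (* A is closed under odot *)
  (forall a b, inA n p a -> inA n p b -> inA n p (odot n p a b)) /\
  (* associativity *)
  (forall a b c, inA n p a -> inA n p b -> inA n p c ->
     odot n p (odot n p a b) c = odot n p a (odot n p b c)) /\
  (* commutativity *)
  (forall a b, inA n p a -> inA n p b -> odot n p a b = odot n p b a) /\
  (* top is a neutral element of A *)
  inA n p (topA n p) /\
  (forall a, inA n p a -> odot n p (topA n p) a = a /\ odot n p a (topA n p) = a).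
Proof.
  split; [|split; [|split; [|split]]].
  - intros [[m r] al] [[k s] be]; apply clos; auto.
  - intros [[m r] al] [[k s] be] [[l t] ga]; apply assoc; auto.
  - intros [[m r] al] [[k s] be]; apply comm; auto.
  - unfold inA, topA, lexle; cbn; lia.
  - intros [[m r] al]; apply neut; auto.
Qed.
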